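(* If $G$ and $H$ are 1-homogeneous graphs, then \[\chi_{vec}(G \times H) = \min\{\chi_{vec}(G), \chi_{vec}(H)\}.\]
   Context: Graphs are finite, simple and undirected. A graph $G$ is 1-homogeneous if (1) for every $k$, the number of closed walks of length $k$ starting at a vertex $u$ does not depend on $u$, and (2) for every $k$, the number of walks of length $k$ from $u$ to $v$, for adjacent $u,v$, does not depend on the edge $uv$. The categorical product $G\times H$ has vertex set $V(G)\times V(H)$, with $(u_1,v_1)\sim(u_2,v_2)$ iff $u_1\sim u_2$ and $v_1\sim v_2$. For a real $k>1$, a vector $k$-coloring of $G$ is a map $\varphi$ from $V(G)$ to the unit sphere of some $\mathbb{R}^d$ with $\varphi(u)^T\varphi(v)\le -\frac{1}{k-1}$ whenever $u\sim v$; the vector chromatic number $\chi_{vec}(G)$ is the smallest such $k$ (equal to $1$ for graphs with no edges). *)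

(* Defs.v *)
From HB Require Import structures.
From mathcomp Require Import all_boot all_order all_algebra.
From mathcomp Require Import all_classical all_reals.
Set Implicit Arguments. Unset Strict Implicit. Unset Printing Implicit Defensive.
Import Order.TTheory GRing.Theory Num.Theory.

Definition simple_graph (V : finType) (e : rel V) : Prop :=
  symmetric e /\ irreflexive e.

Fixpoint nwalks (V : finType) (e : rel V) (k : nat) (u v : V) : nat :=
  match k with
  | 0 => (u == v) : nat
  | k'.+1 => \sum_(w | e u w) nwalks e k' w v
  end.

Definition one_homogeneous (V : finType) (e : rel V) : Prop :=
  (forall (k : nat) (u u' : V), nwalks e k u u = nwalks e k u' u') /\
  (forall (k : nat) (u v u' v' : V), e u v -> e u' v' ->
      nwalks e k u v = nwalks e k u' v').

Definition cat_prod (V W : finType) (e : rel V) (f : rel W) : rel (V * W) :=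
  fun x y => e x.1 y.1 && f x.2 y.2.

Local Open Scope ring_scope.

Definition dotv (R : realType) (d : nat) (x y : 'rV[R]_d) : R := (x *m y^T) 0 0.

Definition vector_colorable (R : realType) (V : finType) (e : rel V) (k : R) : Prop :=
  exists (d : nat) (phi : V -> 'rV[R]_d),
    (forall u, dotv (phi u) (phi u) = 1) /\
    (forall u v, e u v -> dotv (phi u) (phi v) <= - (k - 1)^-1).

Definition has_edge (V : finType) (e : rel V) : Prop := exists u v, e u v.

Definition chi_vec (R : realType) (V : finType) (e : rel V) : R :=
  if `[< has_edge e >] then
    inf [set k : R | 1 < k /\ vector_colorable e k]%classic
  else 1.

(* Main.v *)
Require Import Defs.
From HB Require Import structures.
From mathcomp Require Import all_boot all_order all_algebra.
From mathcomp Require Import all_classical all_reals.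
From mathcomp Require Import ring lra.
Import Order.TTheory GRing.Theory Num.Theory.
Local Open Scope ring_scope.
Section Forms.
Variable R : realType.
Variable T : finType.
Implicit Types (P Y : T -> T -> R) (x y : T -> R).

Definition form P x := \sum_u \sum_v P u v * x u * x v.
Definition bform P x y := \sum_u \sum_v P u v * x u * y v.
Definition psd P := forall x, 0 <= form P x.
Definition symm P := forall u v, P u v = P v u.

Lemma form_expand P x y t :
  form P (fun u => x u + t * y u) =
  form P x + t * (bform P x y + bform P y x) + t ^+ 2 * form P y.
Proof.
rewrite /form /bform mulrDr !mulr_sumr -!big_split /=.
apply: eq_bigr => u _; rewrite !mulr_sumr -!big_split /=.
by apply: eq_bigr => v _; ring.
Qed.

Lemma discr (a b c : R) : 0 <= a ->
  (forall t, 0 <= a * t ^+ 2 + 2 * b * t + c) -> b ^+ 2 <= a * c.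
Proof.
move=> a0 H.
have [a00|an0] := eqVneq a 0.
  rewrite a00 in H *.
  have [->|bn0] := eqVneq b 0; first by rewrite expr0n /= mul0r.
  have h := H (- (c + 1) / (2 * b)).
  have e : 0 * (- (c + 1) / (2 * b)) ^+ 2 + 2 * b * (- (c + 1) / (2 * b)) + c = -1.
    field; done.
  by move: h; rewrite e; lra.
have ap : 0 < a by rewrite lt_def an0.
have h := H (- b / a).
have e : a * (- b / a) ^+ 2 + 2 * b * (- b / a) + c = (a * c - b ^+ 2) / a.
  by field.
by move: h; rewrite e pmulr_lge0 ?invr_gt0 // subr_ge0.
Qed.

Lemma bform_sym P x y : symm P -> bform P x y = bform P y x.
Proof.
move=> sP; rewrite /bform exchange_big; apply: eq_bigr => u _.
by apply: eq_bigr => v _; rewrite sP; ring.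
Qed.

Lemma CS P x y : symm P -> psd P -> bform P x y ^+ 2 <= form P x * form P y.
Proof.
move=> sP pP.
rewrite [form P x * _]mulrC.
apply: (@discr (form P y) (bform P x y) (form P x) (pP y)) => t.
have := pP (fun u => x u + t * y u); rewrite form_expand (@bform_sym P x y sP).
by congr (0 <= _); ring.
Qed.

Definition ind (i : T) : T -> R := fun u => (u == i)%:R.

Lemma sum_ind (i : T) (F : T -> R) : \sum_u F u * ind i u = F i.
Proof.
rewrite (bigD1 i) //= big1 ?addr0 /ind ?eqxx ?mulr1 // => u /negbTE ->.
by rewrite mulr0.
Qed.

Lemma sum_indl (i : T) (F : T -> R) : \sum_u ind i u * F u = F i.
Proof. by rewrite -(sum_ind i F); apply: eq_bigr => u _; rewrite mulrC. Qed.

Lemma bform_ind P i j : bform P (ind i) (ind j) = P i j.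
Proof.
rewrite /bform; under eq_bigr do rewrite (@sum_ind j (fun v => P _ v * ind i _)).
by rewrite (@sum_ind i (fun u => P u j)).
Qed.



Lemma bform_indl P i x : bform P (ind i) x = \sum_v P i v * x v.
Proof.
rewrite /bform; transitivity (\sum_u ind i u * \sum_v P u v * x v).
  apply: eq_bigr => u _; rewrite mulr_sumr; apply: eq_bigr => v _; ring.
exact: (@sum_indl i (fun u => \sum_v P u v * x v)).
Qed.

Lemma form_ind P i : form P (ind i) = P i i.
Proof. exact: bform_ind. Qed.

Lemma psd_diag P i : psd P -> 0 <= P i i.
Proof. by move=> pP; rewrite -form_ind. Qed.

Lemma psd_zero_diag P i j : symm P -> psd P -> P i i = 0 -> P i j = 0.
Proof.
move=> sP pP Pii.
have := @CS P (ind i) (ind j) sP pP.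
rewrite bform_ind !form_ind Pii mul0r.
by move=> h; apply/eqP; rewrite -sqrf_eq0 eq_le h sqr_ge0.
Qed.

Lemma fejer_ind Y (n : nat) : psd Y -> forall (S : {set T}) P, (#|S| <= n)%N ->
  symm P -> psd P -> (forall u v, u \notin S -> P u v = 0) ->
  0 <= \sum_u \sum_v P u v * Y u v.
Proof.
move=> pY; elim: n => [|n IH] S P cS sP pP supp.
  have S0 : S = finset.set0 by apply/eqP; rewrite -cards_eq0 -leqn0.
  rewrite big1 // => u _; rewrite big1 // => v _.
  by rewrite supp ?mul0r // S0 inE.
have [S0|[i iS]] := set_0Vmem S.
  rewrite big1 // => u _; rewrite big1 // => v _.
  by rewrite supp ?mul0r // S0 inE.
have cS' : (#|S :\ i| <= n)%N by rewrite (cardsD1 i S) iS add1n ltnS in cS.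
have [b0|bn0] := eqVneq (P i i) 0.
  apply: (IH (S :\ i) P cS' sP pP) => u v.
  rewrite !inE negb_and negbK => /orP[/eqP->|]; first exact: psd_zero_diag.
  exact: supp.
set b := P i i.
have bp : 0 < b by rewrite lt_def bn0 psd_diag.
pose P' u v := P u v - P i u * P i v / b.
have sP' : symm P' by move=> u v; rewrite /P' sP; ring.
have pP' : psd P'.
  move=> x.
  pose s := (\sum_v P i v * x v) / b.
  have h := pP (fun u => x u + (- s) * ind i u).
  rewrite form_expand form_ind (@bform_sym P _ _ sP) in h.
  have e : bform P (ind i) x = \sum_v P i v * x v.
    rewrite /bform; transitivity (\sum_u ind i u * \sum_v P u v * x v).
      apply: eq_bigr => u _; rewrite mulr_sumr; apply: eq_bigr => v _; ring.
    exact: (@sum_indl i (fun u => \sum_v P u v * x v)).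
  rewrite e in h.
  suff -> : form P' x = form P x - (\sum_v P i v * x v) ^+ 2 / b.
    by move: h; rewrite /s -/b; congr (0 <= _); field; rewrite gt_eqF.
  have -> : (\sum_v P i v * x v) ^+ 2 / b =
      \sum_u \sum_v P i u * P i v / b * x u * x v.
    rewrite expr2 mulr_suml mulr_suml; apply: eq_bigr => u _.
    rewrite mulr_sumr mulr_suml; apply: eq_bigr => v _; ring.
  rewrite /form /P' -sumrB; apply: eq_bigr => u _.
  rewrite -sumrB; apply: eq_bigr => v _; ring.
have suppP' : forall u v, u \notin S :\ i -> P' u v = 0.
  move=> u v; rewrite !inE negb_and negbK => /orP[/eqP->|uS].
    by rewrite /P' -/b; field; rewrite gt_eqF.
  by rewrite /P' supp // -sP supp //; ring.
have := IH (S :\ i) P' cS' sP' pP' suppP'.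
have h2 : 0 <= form Y (fun u => P i u) / b by rewrite divr_ge0 // ltW.
move=> h1.
have -> : \sum_u \sum_v P u v * Y u v =
  \sum_u \sum_v P' u v * Y u v + form Y (fun u => P i u) / b.
  rewrite /form mulr_suml -big_split; apply: eq_bigr => u _ /=.
  rewrite mulr_suml -big_split; apply: eq_bigr => v _ /=.
  rewrite /P'; field; by rewrite gt_eqF.
by rewrite addr_ge0.
Qed.

Lemma fejer P Y : symm P -> psd P -> psd Y -> 0 <= \sum_u \sum_v P u v * Y u v.
Proof.
move=> sP pP pY; apply: (@fejer_ind Y #|[set: T]| pY [set: T] P) => //.
by move=> u v; rewrite inE.
Qed.

Lemma form_comb (a b : R) P Q x :
  form (fun u v => a * P u v + b * Q u v) x = a * form P x + b * form Q x.
Proof.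
rewrite /form !mulr_sumr -big_split; apply: eq_bigr => u _.
rewrite !mulr_sumr -big_split; apply: eq_bigr => v _ /=; ring.
Qed.

End Forms.
Arguments form {R T}.
Arguments bform {R T}.
Arguments psd {R T}.
Arguments symm {R T}.
Arguments ind {R T}.
Arguments fejer {R T}.
Arguments CS {R T}.
Arguments bform_indl {R T}.
Arguments form_ind {R T}.
Arguments psd_diag {R T}.
Arguments form_comb {R T}.
Section Kron.
Variable R : realType.
Variables V W : finType.

Definition Ksum (F : V -> V -> W -> W -> R) (z : V * W -> R) :=
  \sum_a \sum_a' \sum_b \sum_b' F a a' b b' * z (a, b) * z (a', b').

Lemma Ksum_add F G z :
  Ksum (fun a a' b b' => F a a' b b' + G a a' b b') z = Ksum F z + Ksum G z.
Proof.
rewrite /Ksum -big_split; apply: eq_bigr => a _.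
rewrite -big_split; apply: eq_bigr => a' _.
rewrite -big_split; apply: eq_bigr => b _.
rewrite -big_split; apply: eq_bigr => b' _ /=; ring.
Qed.

Lemma Ksum_scale (c : R) F z :
  Ksum (fun a a' b b' => c * F a a' b b') z = c * Ksum F z.
Proof.
rewrite /Ksum mulr_sumr; apply: eq_bigr => a _.
rewrite mulr_sumr; apply: eq_bigr => a' _.
rewrite mulr_sumr; apply: eq_bigr => b _.
rewrite mulr_sumr; apply: eq_bigr => b' _ /=; ring.
Qed.

Lemma Ksum_psd (P : V -> V -> R) (Q : W -> W -> R) z :
  symm P -> psd P -> psd Q -> 0 <= Ksum (fun a a' b b' => P a a' * Q b b') z.
Proof.
move=> sP pP pQ.
pose Y a a' := \sum_b \sum_b' Q b b' * z (a, b) * z (a', b').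
have -> : Ksum (fun a a' b b' => P a a' * Q b b') z =
    \sum_a \sum_a' P a a' * Y a a'.
  rewrite /Ksum; apply: eq_bigr => a _; apply: eq_bigr => a' _.
  rewrite mulr_sumr; apply: eq_bigr => b _.
  rewrite mulr_sumr; apply: eq_bigr => b' _; ring.
apply: fejer => // x.
have -> : form Y x = form Q (fun b => \sum_a x a * z (a, b)).
  rewrite /form /Y.
  transitivity (\sum_a \sum_a' \sum_b \sum_b' Q b b' * (x a * z (a, b)) * (x a' * z (a', b'))).
    apply: eq_bigr => a _; apply: eq_bigr => a' _.
    rewrite mulr_suml mulr_suml; apply: eq_bigr => b _.
    rewrite mulr_suml mulr_suml; apply: eq_bigr => b' _; ring.
  transitivity (\sum_b \sum_b' \sum_a \sum_a' Q b b' * (x a * z (a, b)) * (x a' * z (a', b'))).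
    under eq_bigr do rewrite exchange_big.
    rewrite exchange_big; apply: eq_bigr => b _.
    under eq_bigr do rewrite exchange_big.
    by rewrite exchange_big.
  apply: eq_bigr => b _; apply: eq_bigr => b' _.
  rewrite -mulrA mulr_suml mulr_sumr; apply: eq_bigr => a _.
  rewrite mulr_sumr mulr_sumr; apply: eq_bigr => a' _; ring.
exact: pQ.
Qed.

End Kron.
Arguments Ksum {R V W}.
Section GraphForms.
Variable R : realType.
Variable T : finType.
Variable r : rel T.

Definition adj : T -> T -> R := fun u v => (r u v)%:R.
Definition Idm : T -> T -> R := fun u v => (u == v)%:R.
Definition norm2 (x : T -> R) := \sum_u x u ^+ 2.
Definition regular (D : R) := forall u, \sum_v adj u v = D.

Lemma form_Idm x : form Idm x = norm2 x.
Proof.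
rewrite /form /norm2; apply: eq_bigr => u _.
rewrite (bigD1 u) //= big1 ?addr0 /Idm ?eqxx.
  by rewrite mul1r expr2.
by move=> v; rewrite eq_sym => /negbTE ->; rewrite !mul0r.
Qed.

Lemma symm_adj : symmetric r -> symm (adj).
Proof. by move=> sr u v; rewrite /adj sr. Qed.

Lemma symm_Idm : symm Idm.
Proof. by move=> u v; rewrite /Idm eq_sym. Qed.

Lemma sums_e12 D x : symmetric r -> regular D ->
  (\sum_u \sum_v adj u v * x u ^+ 2 = D * norm2 x) /\
  (\sum_u \sum_v adj u v * x v ^+ 2 = D * norm2 x).
Proof.
move=> sr reg.
have e1 : \sum_u \sum_v adj u v * x u ^+ 2 = D * norm2 x.
  rewrite /norm2 mulr_sumr; apply: eq_bigr => u _.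
  by rewrite -mulr_suml reg.
split=> //; rewrite exchange_big -e1; apply: eq_bigr => u _; apply: eq_bigr => v _.
by rewrite /adj sr.
Qed.

Lemma form_upper D x : symmetric r -> regular D -> form adj x <= D * norm2 x.
Proof.
move=> sr reg; have [e1 e2] := @sums_e12 D x sr reg.
have e : \sum_u \sum_v adj u v * (x u - x v) ^+ 2 =
   (\sum_u \sum_v adj u v * x u ^+ 2) + (\sum_u \sum_v adj u v * x v ^+ 2) - 2 * form adj x.
  rewrite /form -big_split mulr_sumr -sumrB; apply: eq_bigr => u _.
  rewrite -big_split /= mulr_sumr -sumrB; apply: eq_bigr => v _ /=; ring.
have : 0 <= \sum_u \sum_v adj u v * (x u - x v) ^+ 2.
  apply: sumr_ge0 => u _; apply: sumr_ge0 => v _.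
  by rewrite mulr_ge0 ?sqr_ge0 // /adj ler0n.
rewrite e e1 e2; lra.
Qed.

Lemma form_lower_reg D x : symmetric r -> regular D -> - D * norm2 x <= form adj x.
Proof.
move=> sr reg; have [e1 e2] := @sums_e12 D x sr reg.
have e : \sum_u \sum_v adj u v * (x u + x v) ^+ 2 =
   (\sum_u \sum_v adj u v * x u ^+ 2) + (\sum_u \sum_v adj u v * x v ^+ 2) + 2 * form adj x.
  rewrite /form -big_split mulr_sumr -big_split; apply: eq_bigr => u _.
  rewrite -big_split /= mulr_sumr -big_split; apply: eq_bigr => v _ /=; ring.
have : 0 <= \sum_u \sum_v adj u v * (x u + x v) ^+ 2.
  apply: sumr_ge0 => u _; apply: sumr_ge0 => v _.
  by rewrite mulr_ge0 ?sqr_ge0 // /adj ler0n.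
rewrite e e1 e2; lra.
Qed.

Lemma dotvE d (a b : 'rV[R]_d) : dotv a b = \sum_j a 0 j * b 0 j.
Proof. by rewrite /dotv mxE; apply: eq_bigr => j _; rewrite mxE. Qed.

Lemma lowerL (c k D : R) (u0 : T) : 0 < D -> regular D ->
  (forall x, - c * norm2 x <= form adj x) -> 1 < k -> vector_colorable r k ->
  1 + D / c <= k.
Proof.
move=> Dp reg low k1 [d [phi [phi1 phie]]].
pose S := \sum_u \sum_v adj u v * dotv (phi u) (phi v).
pose n : R := #|T|%:R.
have np : 0 < n by rewrite ltr0n; apply/card_gt0P; exists u0.
have e1 : S = \sum_j form adj (fun u => phi u 0 j).
  rewrite /S /form; symmetry; rewrite exchange_big; apply: eq_bigr => u _.
  rewrite exchange_big; apply: eq_bigr => v _.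
  rewrite dotvE mulr_sumr; apply: eq_bigr => j _; ring.
have e2 : \sum_j norm2 (fun u => phi u 0 j) = n.
  rewrite /norm2 exchange_big /n -sumr_const; apply: eq_bigr => u _.
  rewrite -(phi1 u) dotvE; apply: eq_bigr => j _; by rewrite expr2.
have h1 : - c * n <= S.
  rewrite e1 -e2 mulr_sumr; apply: ler_sum => j _; exact: low.
set iv := (k - 1)^-1.
have h2 : S <= - iv * (n * D).
  have -> : - iv * (n * D) = \sum_u \sum_v adj u v * (- iv).
    rewrite /n -sumr_const mulr_suml mulr_sumr; apply: eq_bigr => u _.
    by rewrite -mulr_suml (reg u); ring.
  apply: ler_sum => u _; apply: ler_sum => v _.
  rewrite /adj; case: (boolP (r u v)) => ruv; last by rewrite !mul0r.
  by rewrite !mul1r phie.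
have ivp : 0 < iv by rewrite invr_gt0 subr_gt0.
have ik : (k - 1) * iv = 1 by rewrite mulfV // gt_eqF // subr_gt0.
have h3 : iv * D <= c.
  have : (iv * D) * n <= c * n by nra.
  by rewrite ler_pM2r.
have cp : 0 < c by apply: lt_le_trans h3; rewrite mulr_gt0.
rewrite -lerBrDl ler_pdivrMr //.
nra.
Qed.

End GraphForms.
Arguments adj {R T}.
Arguments Idm {R T}.
Arguments norm2 {R T}.
Arguments regular {R T}.
Section Eigen.
Variable R : realType.
Variable n : nat.
Local Notation M := ('M[R]_n.+1).

Lemma sqfree1 (S X : M) : S^T = S -> S *m (S *m X) = 0 -> S *m X = 0.
Proof.
move=> sS h.
set Z := S *m X.
have ZZ : Z^T *m Z = 0.
  by rewrite /Z trmx_mul sS -mulmxA h mulmx0.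
apply/matrixP => i j; rewrite [RHS]mxE.
have : (Z^T *m Z) j j = 0 by rewrite ZZ mxE.
rewrite mxE => /eqP; rewrite psumr_eq0 => [/allP hall|k _]; last first.
  by rewrite mxE -expr2 sqr_ge0.
have := hall i (mem_index_enum i); rewrite mxE -expr2 sqrf_eq0 => /eqP ->.
done.
Qed.

Lemma sqfree (S X : M) m : S^T = S -> S ^+ m *m X = 0 -> S *m X = 0.
Proof.
move=> sS; elim: m X => [|m IH] X.
  by rewrite expr0 mul1mx => ->; rewrite mulmx0.
rewrite exprSr mulmxE -mulrA -mulmxE => /IH h.
exact: sqfree1.
Qed.

Lemma horner_eigen (A : M) (v : 'rV[R]_n.+1) (lam : R) (p : {poly R}) :
  v *m A = lam *: v -> v *m horner_mx A p = p.[lam] *: v.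
Proof.
move=> hv; elim/poly_ind: p => [|p c IH].
  by rewrite rmorph0 mulmx0 horner0 scale0r.
rewrite rmorphD rmorphM /= horner_mx_X horner_mx_C !hornerE.
rewrite mulmxDr -mulmxE mulmxA IH -scalemxAl hv scalerA mul_mx_scalar.
by rewrite scalerDl.
Qed.

Lemma horner_comm (A : M) (p q : {poly R}) :
  horner_mx A p *m horner_mx A q = horner_mx A q *m horner_mx A p.
Proof. by rewrite mulmxE -!rmorphM mulrC. Qed.

Lemma horner_tr (A : M) (p : {poly R}) : A^T = A -> (horner_mx A p)^T = horner_mx A p.
Proof.
move=> sA; elim/poly_ind: p => [|p c IH].
  by rewrite rmorph0 trmx0.
rewrite rmorphD rmorphM /= horner_mx_X horner_mx_C raddfD /= tr_scalar_mx.
rewrite -mulmxE trmx_mul IH sA.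
have := horner_comm A 'X p; rewrite horner_mx_X => ->.
done.
Qed.

End Eigen.
Section EigenMain.
Variable R : realType.
Variable n : nat.
Local Notation M := ('M[R]_n.+1).

Lemma bform_Idm (a b : 'I_n.+1 -> R) : bform Idm a b = \sum_u a u * b u.
Proof.
rewrite /bform; apply: eq_bigr => u _.
rewrite (bigD1 u) //= big1 ?addr0 /Idm ?eqxx ?mul1r //.
by move=> v; rewrite eq_sym => /negbTE ->; rewrite !mul0r.
Qed.

Lemma psd_Idm : psd (@Idm R 'I_n.+1).
Proof.
move=> x; rewrite form_Idm.
by apply: sumr_ge0 => u _; exact: sqr_ge0.
Qed.

Lemma margin (B : M) : B^T = B -> psd (fun i j => B i j) -> B \in unitmx ->
  exists eps, 0 < eps /\ forall x, eps * norm2 x <= form (fun i j => B i j) x.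
Proof.
move=> sB pB uB.
have sBf : symm (fun i j => B i j).
  by move=> i j /=; rewrite -{1}sB mxE.
set C := invmx B.
pose K := \sum_k \sum_j C k j ^+ 2.
pose Tr := \sum_i B i i.
have K0 : 0 <= K by apply: sumr_ge0 => k _; apply: sumr_ge0 => j _; exact: sqr_ge0.
have T0 : 0 <= Tr by apply: sumr_ge0 => i _; exact: (psd_diag (fun i j => B i j) i pB).
have c1 : forall x, norm2 (fun i => \sum_j B i j * x j) <= Tr * form (fun i j => B i j) x.
  move=> x; rewrite /norm2 /Tr mulr_suml; apply: ler_sum => i _.
  have := CS (fun i j => B i j) (ind i) x sBf pB.
  by rewrite bform_indl form_ind.
have c2 : forall x, norm2 x <= K * norm2 (fun i => \sum_j B i j * x j).
  move=> x; rewrite /norm2 /K mulr_suml; apply: ler_sum => k _.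
  have xk : x k = \sum_j C k j * (\sum_l B j l * x l).
    transitivity (\sum_l (C *m B) k l * x l).
      by rewrite mulVmx // (bigD1 k) //= big1 ?addr0 ?mxE ?eqxx ?mul1r //
        => l /negbTE; rewrite mxE eq_sym => ->; rewrite mul0r.
    under eq_bigr do rewrite mxE mulr_suml.
    rewrite exchange_big; apply: eq_bigr => j _; rewrite mulr_sumr.
    by apply: eq_bigr => l _; rewrite mulrA.
  rewrite xk.
  have := CS Idm (fun j => C k j) (fun j => \sum_l B j l * x l) (@symm_Idm R _) psd_Idm.
  rewrite bform_Idm !form_Idm /norm2.
  done.
exists (K * Tr + 1)^-1; split; first by rewrite invr_gt0; nra.
move=> x; rewrite ler_pdivrMl; last by nra.
have f0 : 0 <= form (fun i j => B i j) x by exact: pB.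
have := c1 x; have := c2 x.
set a := norm2 _; set y := norm2 _.
move=> h2 h1.
have : K * y <= K * (Tr * form (fun i j => B i j) x) by rewrite ler_wpM2l.
nra.
Qed.

End EigenMain.
Section EigenExists.
Variable R : realType.
Variable n : nat.
Local Notation M := ('M[R]_n.+1).
Variable A : M.
Hypothesis sA : A^T = A.

Definition Eset := [set t : R | forall x, t * norm2 x <= form (fun i j => A i j) x]%classic.

Lemma Bform (lam : R) x :
  form (fun i j => (A - lam%:M) i j) x = form (fun i j => A i j) x - lam * norm2 x.
Proof.
rewrite -form_Idm /form mulr_sumr -sumrB; apply: eq_bigr => i _.
rewrite mulr_sumr -sumrB; apply: eq_bigr => j _.
by rewrite !mxE /Idm -mulr_natr; ring.
Qed.

Lemma eigen_exists (t0 b : R) : Eset t0 -> (forall t, Eset t -> t <= b) ->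
  exists lam, Eset lam /\ lam <= b /\
  exists N : M, [/\ N != 0, A *m N = lam *: N, N^T = N &
                     exists p, N = horner_mx A p].
Proof.
move=> Et0 Eb.
have hs : has_sup Eset by split; [exists t0 | exists b => t Et; exact: Eb].
set lam := sup Eset.
have Elam : Eset lam.
  move=> x; rewrite leNgt; apply/negP => hlt.
  have n0 : 0 <= norm2 x by apply: sumr_ge0 => i _; exact: sqr_ge0.
  have [nx0|nn0] := eqVneq (norm2 x) 0.
    have := Et0 x; rewrite nx0 mulr0 => h; move: hlt; rewrite nx0 mulr0.
    by rewrite ltNge h.
  have np : 0 < norm2 x by rewrite lt_def nn0 n0.
  set q := form (fun i j => A i j) x / norm2 x.
  have qlt : q < lam by rewrite /q ltr_pdivrMr.
  have epsp : 0 < lam - q by rewrite subr_gt0.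
  have [t Et ht] := sup_adherent epsp hs.
  have := Et x; rewrite -ler_pdivlMr // -/q.
  move: ht; rewrite -/lam opprB addrC subrK => ht.
  by rewrite leNgt ht.
have lamb : lam <= b by apply: ge_sup; [exists t0 | move=> t Et; exact: Eb].
set B := A - lam%:M.
have sB : B^T = B by rewrite /B raddfB /= tr_scalar_mx sA.
have pB : psd (fun i j => B i j) by move=> x; rewrite Bform subr_ge0; exact: Elam.
have detB : \det B == 0.
  apply/negPn/negP => hd.
  have uB : B \in unitmx by rewrite unitmxE unitfE.
  have [eps [epsp heps]] := @margin R n B sB pB uB.
  have : Eset (lam + eps).
    move=> x; have := heps x; rewrite Bform mulrDl; lra.
  move/(sup_upper_bound hs); rewrite -/lam; lra.
have /det0P [v vn0 vB] := detB.
have vA : v *m A = lam *: v.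
  by move: vB; rewrite /B mulmxBr mul_mx_scalar => /eqP; rewrite subr_eq0 => /eqP.
have [m [q hq hcp]] := multiplicity_XsubC (char_poly A) lam.
have cp0 : char_poly A != 0 by rewrite monic_neq0 // char_poly_monic.
rewrite cp0 /= in hq.
set N := horner_mx A q.
set S := horner_mx A ('X - lam%:P).
have SB : S = B by rewrite /S rmorphB /= horner_mx_X horner_mx_C.
have SN : S ^+ m *m N = 0.
  have e : S ^+ m = horner_mx A (('X - lam%:P) ^+ m) by rewrite rmorphXn.
  have := Cayley_Hamilton A; rewrite hcp rmorphM /= -e => h.
  by rewrite e horner_comm mulmxE -e.
have BN : B *m N = 0.
  rewrite -SB; apply: (@sqfree R n S N m) => //; by rewrite SB.
have AN : A *m N = lam *: N.
  by move: BN; rewrite /B mulmxBl mul_scalar_mx => /eqP; rewrite subr_eq0 => /eqP.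
exists lam; split => //; split => //; exists N; split => //.
- apply/negP => /eqP N0; have := @horner_eigen R n A v lam q vA; rewrite -/N N0 mulmx0.
  by move=> /esym/eqP; rewrite scaler_eq0 -rootE (negbTE hq) (negbTE vn0).
- exact: horner_tr.
- by exists q.
Qed.

End EigenExists.
Section GraphSpec.
Variable R : realType.
Variable V : finType.
Variable e : rel V.
Hypothesis hsym : symmetric e.
Hypothesis hirr : irreflexive e.
Hypothesis hom : one_homogeneous e.
Variables u0 v0 : V.
Hypothesis huv : e u0 v0.
Variable n : nat.
Variable g : 'I_n.+1 -> V.
Variable g' : V -> 'I_n.+1.
Hypothesis gK : cancel g g'.
Hypothesis g'K : cancel g' g.

Local Notation adjR := (@adj R V e).

Lemma sum_g (F : V -> R) : \sum_i F (g i) = \sum_u F u.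
Proof.
by symmetry; rewrite (reindex g) //; exists g' => u _; [exact: gK | exact: g'K].
Qed.

Lemma nwalks_R k u v :
  (nwalks e k.+1 u v)%:R = \sum_w adjR u w * (nwalks e k w v)%:R :> R.
Proof.
rewrite /= natr_sum big_mkcond; apply: eq_bigr => w _ /=.
by rewrite /adj; case: (e u w); rewrite ?mul1r ?mul0r.
Qed.

Lemma nwalks2 u : (nwalks e 2 u u)%:R = \sum_v adjR u v :> R.
Proof.
rewrite nwalks_R; apply: eq_bigr => w _.
rewrite nwalks_R.
have -> : \sum_w0 adjR w w0 * (nwalks e 0 w0 u)%:R = adjR w u.
  rewrite /= (bigD1 u) //= eqxx mulr1 big1 ?addr0 // => w' /negbTE ->.
  by rewrite mulr0.
by rewrite /adj [e w u]hsym; case: (e u w); rewrite /= ?mulr1 ?mulr0.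
Qed.

Definition Dg : R := (nwalks e 2 u0 u0)%:R.

Lemma reg_e : regular e Dg.
Proof. move=> u; rewrite -nwalks2 /Dg; congr (_%:R); exact: hom.1. Qed.

Lemma Dg_gt0 : 0 < Dg.
Proof.
rewrite /Dg nwalks2 (bigD1 v0) //= /adj huv.
rewrite ltr_pwDl ?ltr01 //; apply: sumr_ge0 => v _; exact: ler0n.
Qed.

Definition Ag : 'M[R]_n.+1 := \matrix_(i, j) adjR (g i) (g j).

Lemma Ag_sym : Ag^T = Ag.
Proof. by apply/matrixP => i j; rewrite !mxE /adj hsym. Qed.

Lemma Ag_pow k i j : (Ag ^+ k) i j = (nwalks e k (g i) (g j))%:R.
Proof.
elim: k i j => [|k IH] i j.
  by rewrite expr0 mxE /= (inj_eq (can_inj gK)).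
rewrite exprS -mulmxE mxE nwalks_R -sum_g; apply: eq_bigr => l _.
by rewrite mxE IH.
Qed.

Lemma horner_entry (p : {poly R}) i j :
  (horner_mx Ag p) i j = \sum_(k < size p) p`_k * (nwalks e k (g i) (g j))%:R.
Proof.
rewrite -{1}[p]coefK poly_def rmorph_sum /= summxE; apply: eq_bigr => k _.
by rewrite linearZ /= rmorphXn /= horner_mx_X mxE Ag_pow.
Qed.

Lemma form_transfer (F : V -> V -> R) (x : 'I_n.+1 -> R) :
  form (fun i j => F (g i) (g j)) x = form F (fun u => x (g' u)).
Proof.
rewrite /form -sum_g; apply: eq_bigr => i _.
rewrite -sum_g; apply: eq_bigr => j _.
by rewrite !gK.
Qed.

Lemma norm2_transfer (x : 'I_n.+1 -> R) : norm2 x = norm2 (fun u => x (g' u)).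
Proof. by rewrite /norm2 -sum_g; apply: eq_bigr => i _; rewrite gK. Qed.

Lemma Eset_iff t : @Eset R n Ag t <-> forall y : V -> R, t * norm2 y <= form adjR y.
Proof.
split.
  move=> h y; have := h (fun i => y (g i)).
  have -> : form (fun i j => Ag i j) (fun i => y (g i)) =
      form (fun i j => adjR (g i) (g j)) (fun i => y (g i)).
    by rewrite /form; apply: eq_bigr => i _; apply: eq_bigr => j _; rewrite mxE.
  rewrite form_transfer norm2_transfer.
  have -> : (fun u => y (g (g' u))) = y by apply: funext => u; rewrite g'K.
  done.
move=> h x.
have -> : form (fun i j => Ag i j) x = form (fun i j => adjR (g i) (g j)) x.
  by rewrite /form; apply: eq_bigr => i _; apply: eq_bigr => j _; rewrite mxE.
by rewrite form_transfer norm2_transfer.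
Qed.

Lemma graph_main : exists mu : R, 0 < mu /\
  (forall y, - mu * norm2 y <= form adjR y) /\ vector_colorable e (1 + Dg / mu).
Proof.
have Et0 : @Eset R n Ag (- Dg).
  apply/Eset_iff => y; exact: (@form_lower_reg R V e Dg y hsym reg_e).
have uv : u0 != v0 by apply/negP => /eqP h; move: huv; rewrite h hirr.
have Eb : forall t, @Eset R n Ag t -> t <= -1.
  move=> t /Eset_iff /(_ (fun u => ind u0 u + (-1) * ind v0 u)).
  rewrite -form_Idm !form_expand !bform_ind !form_ind /Idm /adj !eqxx !hirr huv hsym huv.
  rewrite [v0 == u0]eq_sym (negbTE uv) /=; lra.
have [lam [Elam [lamb [N [Nn0 AN sN [p Np]]]]]] :=
  @eigen_exists R n Ag Ag_sym (- Dg) (-1) Et0 Eb.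
have lamn : lam < 0 by lra.
exists (- lam); split; first by lra.
split.
  move=> y; have := (Eset_iff lam).1 Elam y; by rewrite opprK.
set Mx := N *m N.
have Mh : Mx = horner_mx Ag (p * p) by rewrite /Mx rmorphM /= -Np mulmxE.
have AM : Ag *m Mx = lam *: Mx by rewrite /Mx mulmxA AN scalemxAl.
have Nsym : forall i j, N i j = N j i.
  by move=> i j; rewrite -{1}sN mxE.
have Ment : forall i j, Mx i j = \sum_k N i k * N j k.
  by move=> i j; rewrite mxE; apply: eq_bigr => k _; rewrite [N k j]Nsym.
set c := Mx ord0 ord0.
have Mdiag : forall i, Mx i i = c.
  move=> i; rewrite /c Mh !horner_entry; apply: eq_bigr => k _.
  by congr (_ * _%:R); exact: hom.1.
set m0 := Mx (g' u0) (g' v0).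
have Medge : forall i j, e (g i) (g j) -> Mx i j = m0.
  move=> i j hij; rewrite /m0 Mh !horner_entry; apply: eq_bigr => k _.
  congr (_ * _%:R); apply: hom.2 => //; by rewrite !g'K.
have c0 : 0 < c.
  have cge : 0 <= c by rewrite /c Ment; apply: sumr_ge0 => k _; rewrite -expr2 sqr_ge0.
  rewrite lt_def cge andbT; apply/negP => /eqP c00.
  move/negP: Nn0; apply; apply/eqP/matrixP => i k; rewrite mxE.
  have : \sum_k N i k * N i k = 0 by rewrite -Ment Mdiag.
  move/eqP; rewrite psumr_eq0 => [/allP /(_ k (mem_index_enum k))|l _]; last first.
    by rewrite -expr2 sqr_ge0.
  by rewrite -expr2 sqrf_eq0 => /eqP.
have hm : Dg * m0 = lam * c.
  have := congr1 (fun X : 'M_n.+1 => X (g' u0) (g' u0)) AM.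
  rewrite /= [in RHS]mxE Mdiag mxE => <-.
  rewrite -(reg_e u0) mulr_suml -sum_g; apply: eq_bigr => l _.
  rewrite mxE g'K /adj; case: (boolP (e u0 (g l))) => h; last by rewrite !mul0r.
  rewrite !mul1r Medge // g'K hsym //.
set s := (Num.sqrt c)^-1.
have s2 : s * s = c^-1 by rewrite /s -invrM -?expr2 ?sqr_sqrtr ?ltW // unitfE gt_eqF // sqrtr_gt0.
pose phi u : 'rV[R]_n.+1 := s *: row (g' u) N.
have dphi : forall u v, dotv (phi u) (phi v) = c^-1 * Mx (g' u) (g' v).
  move=> u v; rewrite dotvE Ment -s2 mulr_sumr; apply: eq_bigr => k _.
  rewrite !mxE; ring.
exists n.+1, phi; split.
  by move=> u; rewrite dphi Mdiag mulVf // gt_eqF.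
move=> u v huv'; rewrite dphi Medge ?g'K //.
have Dn0 : Dg != 0 by rewrite gt_eqF // Dg_gt0.
have -> : m0 = lam * c / Dg by rewrite -hm; field.
have lam0 : lam != 0 by rewrite lt_eqF.
have cn0 : c != 0 by rewrite gt_eqF.
rewrite le_eqVlt; apply/orP; left; apply/eqP.
field.
rewrite lam0 cn0 /= andbT -/Dg.
have -> : - lam + Dg + -1 * - lam = Dg by ring.
exact: Dn0.
Qed.

End GraphSpec.
Section Prod.
Variable R : realType.
Variables V W : finType.
Variables (e : rel V) (f : rel W).

Lemma sum_pair (F : V * W -> R) : \sum_x F x = \sum_a \sum_b F (a, b).
Proof. by rewrite pair_bigA; apply: eq_bigr => -[a b]. Qed.

Lemma adj_prod a b a' b' :
  @adj R _ (cat_prod e f) (a, b) (a', b') = adj e a a' * adj f b b'.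
Proof. by rewrite /adj /cat_prod /=; case: (e a a'); case: (f b b'); rewrite /= ?mulr1 ?mulr0. Qed.

Lemma Ksum_ext (F G : V -> V -> W -> W -> R) z : (forall a a' b b', F a a' b b' = G a a' b b') ->
  Ksum F z = Ksum G z :> R.
Proof.
move=> h; rewrite /Ksum; apply: eq_bigr => a _; apply: eq_bigr => a' _.
by apply: eq_bigr => b _; apply: eq_bigr => b' _; rewrite h.
Qed.

Lemma form_prod (z : V * W -> R) : form (adj (cat_prod e f)) z =
  Ksum (fun a a' b b' => adj e a a' * adj f b b') z.
Proof.
rewrite /form sum_pair /Ksum; apply: eq_bigr => a _.
under eq_bigr do rewrite sum_pair.
rewrite exchange_big; apply: eq_bigr => a' _; apply: eq_bigr => b _.
by apply: eq_bigr => b' _; rewrite adj_prod.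
Qed.

Lemma norm2_prod (z : V * W -> R) : norm2 z = Ksum (fun a a' b b' => @Idm R _ a a' * Idm b b') z.
Proof.
rewrite /norm2 sum_pair /Ksum; apply: eq_bigr => a _.
symmetry; rewrite (bigD1 a) //= [X in _ + X]big1 ?addr0; last first.
  move=> a' /negbTE h; apply: big1 => b _; apply: big1 => b' _.
  by rewrite /Idm eq_sym h !mul0r.
apply: eq_bigr => b _; rewrite (bigD1 b) //= [X in _ + X]big1 ?addr0; last first.
  by move=> b' /negbTE h; rewrite /Idm eq_sym h !mulr0 !mul0r.
by rewrite /Idm !eqxx !mul1r expr2.
Qed.

Lemma reg_prod (DG DH : R) : regular e DG -> regular f DH ->
  regular (cat_prod e f) (DG * DH).
Proof.
move=> rG rH [a b]; rewrite sum_pair -(rG a) mulr_suml; apply: eq_bigr => a' _.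
by rewrite -(rH b) mulr_sumr; apply: eq_bigr => b' _; rewrite adj_prod.
Qed.

Lemma prod_lower (DG DH muG muH : R) :
  0 < DG -> 0 < DH -> 0 < muG -> 0 < muH -> symmetric e -> symmetric f ->
  regular e DG -> regular f DH ->
  (forall y, - muG * norm2 y <= form (adj e) y) ->
  (forall y, - muH * norm2 y <= form (adj f) y) ->
  forall z, - Num.max (DG * muH) (DH * muG) * norm2 z <= form (adj (cat_prod e f)) z.
Proof.
move=> DGp DHp mGp mHp se sf rG rH lG lH z.
set c := Num.max (DG * muH) (DH * muG).
have c1 : DG * muH <= c by rewrite le_max lexx.
have c2 : DH * muG <= c by rewrite le_max lexx orbT.
pose P1 a a' := 1 * adj e a a' + muG * Idm a a'.
pose P2 a a' := DG * Idm a a' + (-1) * adj e a a'.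
pose Q1 b b' := 1 * adj f b b' + muH * Idm b b'.
pose Q2 b b' := DH * Idm b b' + (-1) * adj f b b'.
have sP1 : symm P1 by move=> a a'; rewrite /P1 (@symm_adj R V e se a a') (@symm_Idm R V a a').
have sP2 : symm P2 by move=> a a'; rewrite /P2 (@symm_adj R V e se a a') (@symm_Idm R V a a').
have pP1 : psd P1.
  by move=> x; rewrite form_comb form_Idm; have := lG x; lra.
have pP2 : psd P2.
  by move=> x; rewrite form_comb form_Idm; have := @form_upper R V e DG x se rG; lra.
have pQ1 : psd Q1.
  by move=> x; rewrite form_comb form_Idm; have := lH x; lra.
have pQ2 : psd Q2.
  by move=> x; rewrite form_comb form_Idm; have := @form_upper R W f DH x sf rH; lra.
set k := (DG + muG) * (DH + muH).
have kp : 0 < k by rewrite mulr_gt0 // addr_gt0.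
have e0 : form (adj (cat_prod e f)) z + c * norm2 z =
  Ksum (fun a a' b b' =>
    (DG * DH + c) / k * (P1 a a' * Q1 b b') +
    ((c - DG * muH) / k * (P1 a a' * Q2 b b') +
    ((c - muG * DH) / k * (P2 a a' * Q1 b b') +
    (muG * muH + c) / k * (P2 a a' * Q2 b b')))) z.
  rewrite form_prod norm2_prod -Ksum_scale -Ksum_add; apply: Ksum_ext => a a' b b'.
  rewrite /P1 /P2 /Q1 /Q2 /k; field.
  by rewrite !gt_eqF ?addr_gt0.
have : 0 <= form (adj (cat_prod e f)) z + c * norm2 z.
  rewrite e0 !Ksum_add !Ksum_scale.
  have k0 : 0 <= k^-1 by rewrite invr_ge0 ltW.
  repeat apply: addr_ge0; apply: mulr_ge0;
    try (apply: Ksum_psd => //);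
    try (apply: divr_ge0; [|exact: ltW]; nra).
lra.
Qed.

End Prod.
Lemma graph_spec (R : realType) (V : finType) (e : rel V) :
  simple_graph e -> one_homogeneous e -> has_edge e ->
  exists D mu : R, [/\ 0 < D, 0 < mu, regular e D,
    (forall y, - mu * norm2 y <= form (adj e) y) & vector_colorable e (1 + D / mu)].
Proof.
move=> [hsym hirr] hom [u0 [v0 huv]].
have c0 : (0 < #|V|)%N by apply/card_gt0P; exists u0.
have hn : #|V| = (#|V|.-1).+1 by rewrite prednK.
pose g (i : 'I_(#|V|.-1).+1) : V := enum_val (cast_ord (esym hn) i).
pose g' (u : V) : 'I_(#|V|.-1).+1 := cast_ord hn (enum_rank u).
have gK : cancel g g' by move=> i; rewrite /g /g' enum_valK cast_ordKV.
have g'K : cancel g' g by move=> u; rewrite /g /g' cast_ordK enum_rankK.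
have [mu [mup [low col]]] := @graph_main R V e hsym hirr hom u0 v0 huv _ g g' gK g'K.
exists (@Dg R V e u0), mu; split => //.
- exact: (@Dg_gt0 R V e hsym u0 v0 huv).
- exact: (@reg_e R V e hsym hom u0).
Qed.

Lemma chi_eq (R : realType) (V : finType) (e : rel V) (kappa : R) :
  has_edge e -> 1 < kappa -> vector_colorable e kappa ->
  (forall k, 1 < k -> vector_colorable e k -> kappa <= k) -> chi_vec R e = kappa.
Proof.
move=> he k1 ck low.
rewrite /chi_vec asboolT //.
set S := [set k : R | 1 < k /\ vector_colorable e k]%classic.
have Sk : S kappa by split.
have lb : lbound S kappa by move=> k [k1' ck']; exact: low.
apply/eqP; rewrite eq_le; apply/andP; split.
  by apply: ge_inf => //; exists kappa.
by apply: lb_le_inf => //; exists kappa.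
Qed.

Lemma chi_noedge (R : realType) (V : finType) (e : rel V) :
  ~ has_edge e -> chi_vec R e = 1.
Proof. by move=> he; rewrite /chi_vec asboolF. Qed.

Lemma col_fst (R : realType) (V W : finType) (e : rel V) (f : rel W) (k : R) :
  vector_colorable e k -> vector_colorable (cat_prod e f) k.
Proof.
move=> [d [phi [h1 h2]]]; exists d, (fun x => phi x.1); split => //.
by move=> x y /andP[exy _]; exact: h2.
Qed.

Lemma col_snd (R : realType) (V W : finType) (e : rel V) (f : rel W) (k : R) :
  vector_colorable f k -> vector_colorable (cat_prod e f) k.
Proof.
move=> [d [phi [h1 h2]]]; exists d, (fun x => phi x.2); split => //.
by move=> x y /andP[_ fxy]; exact: h2.
Qed.
Lemma chi_spec (R : realType) (V : finType) (e : rel V) :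
  simple_graph e -> one_homogeneous e -> has_edge e ->
  exists D mu : R, [/\ 0 < D, 0 < mu, regular e D,
    (forall y, - mu * norm2 y <= form (adj e) y) & vector_colorable e (1 + D / mu)]
    /\ chi_vec R e = 1 + D / mu.
Proof.
move=> sG hG eE.
have [D [mu [Dp mup reg low col]]] := @graph_spec R V e sG hG eE.
exists D, mu; split => //.
have [u0 _] := eE.
apply: chi_eq => //.
  by rewrite ltrDl divr_gt0.
move=> k k1 ck; exact: (@lowerL R V e mu k D u0 Dp reg low k1 ck).
Qed.

Lemma chi_ge1 (R : realType) (V : finType) (e : rel V) :
  simple_graph e -> one_homogeneous e -> 1 <= chi_vec R e.
Proof.
move=> sG hG; case: (pselect (has_edge e)) => [eE|eN]; last by rewrite chi_noedge.
have [D [mu [[Dp mup _ _ _] ->]]] := @chi_spec R V e sG hG eE.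
by rewrite lerDl divr_ge0 // ltW.
Qed.

Theorem theorem5p5 (R : realType) (V W : finType) (e : rel V) (f : rel W) :
  simple_graph e -> simple_graph f ->
  one_homogeneous e -> one_homogeneous f ->
  chi_vec R (cat_prod e f) = Num.min (chi_vec R e) (chi_vec R f).
Proof.
move=> sG sH hG hH.
case: (pselect (has_edge e)) => [eE|eN]; last first.
  have pN : ~ has_edge (cat_prod e f).
    by move=> [[a b] [[a' b'] /andP[h _]]]; apply: eN; exists a, a'.
  by rewrite (@chi_noedge R _ _ pN) (@chi_noedge R _ _ eN) min_l // (@chi_ge1 R W f sH hH).
case: (pselect (has_edge f)) => [fE|fN]; last first.
  have pN : ~ has_edge (cat_prod e f).
    by move=> [[a b] [[a' b'] /andP[_ h]]]; apply: fN; exists b, b'.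
  by rewrite (@chi_noedge R _ _ pN) (@chi_noedge R _ _ fN) min_r // (@chi_ge1 R V e sG hG).
have [DG [muG [[DGp muGp rG lG cG] ->]]] := @chi_spec R V e sG hG eE.
have [DH [muH [[DHp muHp rH lH cH] ->]]] := @chi_spec R W f sH hH fE.
have [a0 [a1 ea]] := eE; have [b0 [b1 fb]] := fE.
have pE : has_edge (cat_prod e f).
  by exists (a0, b0), (a1, b1); rewrite /cat_prod /= ea fb.
have [sGs _] := sG; have [sHs _] := sH.
apply: chi_eq => //.
- by rewrite lt_min !ltrDl !divr_gt0.
- case: (leP (1 + DG / muG) (1 + DH / muH)) => h.
    exact: col_fst.
  exact: col_snd.
move=> k k1 ck.
have low := @prod_lower R V W e f DG DH muG muH DGp DHp muGp muHp sGs sHs rG rH lG lH.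
have hk := @lowerL R _ (cat_prod e f) _ k (DG * DH) (a0, b0)
  (mulr_gt0 DGp DHp) (@reg_prod R V W e f DG DH rG rH) low k1 ck.
apply: le_trans hk.
rewrite ge_min.
case: (leP (DG * muH) (DH * muG)) => h.
  apply/orP; left.
  rewrite lerD2l le_eqVlt; apply/orP; left; apply/eqP; field.
  by rewrite !gt_eqF.
apply/orP; right.
rewrite lerD2l le_eqVlt; apply/orP; left; apply/eqP; field.
by rewrite !gt_eqF.
Qed.
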